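(* Let $G$ be a finite non-abelian group such that $G/Z(G)\cong C_2\times C_2\times C_2$. Then the non-centralizer graph $\Upsilon_G$ is regular if and only if $[G:C_G(x)]=4$ for all $x\in G\setminus Z(G)$.
   Context: For a finite group $G$, $C_G(x)$ denotes the centralizer of $x\in G$ and $Z(G)$ the center. The non-centralizer graph $\Upsilon_G$ is the simple graph with vertex set $G$ in which two distinct vertices $x,y$ are adjacent if and only if $C_G(x)\neq C_G(y)$. A graph is regular if all its vertices have the same degree. *)

(* Defs.v *)
From mathcomp Require Import all_boot all_order all_algebra all_fingroup all_solvable.
Set Implicit Arguments. Unset Strict Implicit. Unset Printing Implicit Defensive.
Local Open Scope group_scope.

Definition noncent_adj (gT : finGroupType) (G : {group gT}) (x y : gT) : bool :=
  (x != y) && ('C_G[x] != 'C_G[y]).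

Definition noncent_deg (gT : finGroupType) (G : {group gT}) (x : gT) : nat :=
  #|[set y in G | noncent_adj G x y]|.

Definition noncent_regular (gT : finGroupType) (G : {group gT}) : Prop :=
  forall x y, x \in G -> y \in G -> noncent_deg G x = noncent_deg G y.

(* Main.v *)
Require Import Defs.
From mathcomp Require Import all_boot all_order all_algebra all_fingroup all_solvable.
From mathcomp Require Import zify.
Local Open Scope group_scope.
Module Helpers.
Set Implicit Arguments. Unset Strict Implicit.
Lemma centM_Z (gT : finGroupType) (G : {group gT}) x z :
  z \in 'Z(G) -> 'C_G[x * z] = 'C_G[x].
Proof.
move=> zZ; apply/setP=> g; rewrite !in_setI.
case gG: (g \in G) => //=.
have cz : commute g z.
  by move: zZ; rewrite inE => /andP[_ /centP h]; apply/commute_sym/h.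
apply/cent1P/cent1P => h; last exact: commuteM h cz.
by have := commuteM h (commuteV cz); rewrite mulgK.
Qed.

Lemma inZE (gT : finGroupType) (G : {group gT}) y :
  y \in G -> (y \in 'Z(G)) = ('C_G[y] == G).
Proof.
move=> yG; rewrite inE yG /= -sub_cent1 eqEsubset subsetIl /= subsetI subxx.
by [].
Qed.

Definition Sx (gT : finGroupType) (G : {group gT}) x :=
  [set y in G | 'C_G[y] == 'C_G[x]].

Lemma deg_eq (gT : finGroupType) (G : {group gT}) x :
  noncent_deg G x = #|G| - #|Sx G x|.
Proof.
rewrite /noncent_deg.
have -> : [set y in G | noncent_adj G x y] = G :\: Sx G x.
  apply/setP => y; rewrite !inE /noncent_adj.
  case: (y \in G); rewrite ?andbF ?andbT //=.
  by case: eqVneq => [->|_]; rewrite ?eqxx //= eq_sym.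
have sS : Sx G x \subset G by apply/subsetP => y; rewrite inE => /andP[].
by rewrite cardsD (setIidPr sS).
Qed.

Lemma Sx_center (gT : finGroupType) (G : {group gT}) z :
  z \in 'Z(G) -> Sx G z = 'Z(G).
Proof.
move=> zZ; have zG : z \in G by move: zZ; rewrite inE => /andP[].
rewrite /Sx; have := zZ; rewrite inZE // => /eqP ->.
apply/setP => y; rewrite inE.
case yG: (y \in G) => //=; first by rewrite inZE.
by apply/esym/negbTE; apply: contraFN yG; rewrite inE => /andP[].
Qed.
End Helpers.
Import Helpers.
Lemma arith8 a b : (a * b = 8 -> 1 < a -> 1 < b -> (a = 4 /\ b = 2) \/ (a = 2 /\ b = 4))%N.
Proof.
move=> ab h1 h2.
have : (a <= 8)%N by rewrite -ab leq_pmulr //; lia.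
by case: a ab h1 => [|[|[|[|[|[|[|[|[|a]]]]]]]]] ab h1 //= _; lia.
Qed.

Lemma arith4 a b : (a * b = 4 -> 1 < b -> a = 1 \/ a = 2)%N.
Proof.
move=> ab h2.
have : (a <= 4)%N by rewrite -ab leq_pmulr //; lia.
by case: a ab => [|[|[|[|[|a]]]]] ab //= _; lia.
Qed.

Lemma arith2 a b : (a * b = 2 -> 1 < a -> b = 1)%N.
Proof.
move=> ab h1.
have : (a <= 2)%N by rewrite -ab leq_pmulr //; case: b ab => //; rewrite muln0.
by case: a ab h1 => [|[|[|a]]] ab //= _; lia.
Qed.

Theorem theorem2p9 (gT : finGroupType) (G : {group gT}) :
  ~~ abelian G ->
  (G / 'Z(G))%g \isog [set: 'Z_2 * 'Z_2 * 'Z_2] ->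
  (noncent_regular G <->
   (forall x, x \in G :\: 'Z(G) -> #|G : 'C_G[x]| = 4%N)).
Proof.
move=> _ iso.
have ZG : 'Z(G) \subset G := center_sub G.
have nZG : G \subset 'N('Z(G)) := normal_norm (center_normal G).
have iGZ : #|G : 'Z(G)| = 8%N.
  by rewrite -card_quotient // (card_isog iso) cardsT !card_prod card_ord.
have cardG : #|G| = (8 * #|'Z(G)|)%N by rewrite -(Lagrange ZG) iGZ mulnC.
have Zpos : (0 < #|'Z(G)|)%N := cardG_gt0 _.
have cZ : forall z g, z \in 'Z(G) -> g \in G -> commute z g.
  by move=> z g; rewrite inE => /andP[_ /centP h] /h.
have ZH : forall x, x \in G -> 'Z(G) \subset 'C_G[x].
  move=> x xG; apply/subsetP => z zZ; rewrite in_setI (subsetP ZG) //=.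
  by apply/cent1P; apply: cZ.
have HG : forall x, 'C_G[x] \subset G by move=> x; apply: subsetIl.
have idx : forall x, x \in G :\: 'Z(G) ->
   (#|G : 'C_G[x]| = 4 /\ #|'C_G[x]| = 2 * #|'Z(G)|)%N \/
   (#|G : 'C_G[x]| = 2 /\ #|'C_G[x]| = 4 * #|'Z(G)|)%N.
  move=> x /setDP[xG xZ].
  have L := Lagrange_index (HG x) (ZH x xG).
  rewrite iGZ in L.
  have h1 : (1 < #|G : 'C_G[x]|)%N.
    rewrite indexg_gt1; move: xZ; apply: contra => sGH.
    by rewrite inZE // eqEsubset subsetIl sGH.
  have h2 : (1 < #|'C_G[x] : 'Z(G)|)%N.
    rewrite indexg_gt1; apply/subsetPn; exists x => //.
    by rewrite in_setI xG cent1id.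
  have cH : #|'C_G[x]| = (#|'Z(G)| * #|'C_G[x] : 'Z(G)|)%N.
    by rewrite Lagrange // ZH.
  case: (arith8 _ _ L h1 h2) => [[-> e]|[-> e]]; rewrite cH e mulnC; by [left|right].
have Ssub : forall x, x \in G :\: 'Z(G) -> Sx G x \subset 'C_G[x] :\: 'Z(G).
  move=> x /setDP[xG xZ]; apply/subsetP => y; rewrite inE => /andP[yG /eqP e].
  rewrite in_setD -e in_setI yG cent1id andbT.
  rewrite andbT/=; move: xZ; apply: contra => yZ; rewrite inZE // -e -inZE //.
have Scos : forall x, x \in G -> x *: 'Z(G) \subset Sx G x.
  move=> x xG; apply/subsetP => y /lcosetP[z zZ ->].
  rewrite inE groupM ?(subsetP ZG z zZ) //=.
by apply/eqP; apply: centM_Z.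
have cardHZ : forall x, x \in G -> #|'C_G[x] :\: 'Z(G)| = (#|'C_G[x]| - #|'Z(G)|)%N.
  by move=> x xG; rewrite cardsD (setIidPr (ZH x xG)).
split.
- move=> hreg x xGZ.
  have [xG xZ] := setDP xGZ.
  have := hreg x 1 xG (group1 G).
  rewrite !deg_eq (@Sx_center _ G 1) ?group1 //.
  have sSG : Sx G x \subset G by apply/subsetP => y; rewrite inE => /andP[].
  move=> e0.
  have l1 : (#|'Z(G)| <= #|G|)%N := subset_leq_card ZG.
  have l2 : (#|Sx G x| <= #|G|)%N := subset_leq_card sSG.
  have e : (#|G| - #|Sx G x| = #|G| - #|'Z(G)|)%N := e0.
  have eS : #|Sx G x| = #|'Z(G)| by lia.
  case: (idx x xGZ) => [[]//|[i2 c4]].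
  exfalso.
  pose H := 'C_G[x].
  have ZZH : 'Z(G) \subset 'Z(H).
    apply/subsetP => z zZ; rewrite inE (subsetP (ZH x xG)) //=.
    apply/centP => h hH; apply: cZ => //; exact: (subsetP (HG x)).
  have xZH : x \in 'Z(H).
    rewrite inE /H in_setI xG cent1id /=.
    by apply/centP => h; rewrite in_setI => /andP[_ /cent1P]; apply: commute_sym.
  have L := Lagrange_index (center_sub H) ZZH.
  have iHZ : #|H : 'Z(G)| = 4%N.
    have := Lagrange (ZH x xG); rewrite c4 mulnC => /eqP; rewrite eqn_pmul2r //.
    by move/eqP.
  rewrite iHZ in L.
  have h2 : (1 < #|'Z(H) : 'Z(G)|)%N.
    by rewrite indexg_gt1; apply/subsetPn; exists x.
  have abH : abelian H.
    case: (arith4 _ _ L h2) => e1.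
    + have : H \subset 'Z(H) by rewrite -indexg_eq1 e1.
      move=> sHZ; apply: subset_trans sHZ _; exact: subsetIr.
    + apply: cyclic_center_factor_abelian; apply: prime_cyclic.
      by rewrite card_quotient ?e1 // normal_norm // center_normal.
  have : 'C_G[x] :\: 'Z(G) \subset Sx G x.
    apply/subsetP => y /setDP[yH yZ].
    have yG : y \in G := subsetP (HG x) y yH.
    rewrite inE yG /=.
    have sHy : H \subset 'C_G[y].
      rewrite subsetI HG /=; apply/subsetP => h hH; apply/cent1P.
      exact: (centsP abH).
    have L2 := Lagrange_index (HG y) sHy.
    rewrite i2 in L2.
    have h1 : (1 < #|G : 'C_G[y]|)%N.
      rewrite indexg_gt1; move: yZ; apply: contra => sGH.
      by rewrite inZE // eqEsubset subsetIl sGH.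
    have e1 : #|'C_G[y] : H| = 1%N := arith2 _ _ L2 h1.
    move/eqP: e1; rewrite indexg_eq1 => sHy'.
    by rewrite eqEsubset sHy'.
  move/subset_leq_card; rewrite cardHZ // c4 eS; lia.
- move=> h4.
  have key : forall x, x \in G -> #|Sx G x| = #|'Z(G)|.
    move=> x xG; case xZ: (x \in 'Z(G)); first by rewrite Sx_center.
    have xGZ : x \in G :\: 'Z(G) by rewrite in_setD xZ xG.
    have c2 : #|'C_G[x]| = (2 * #|'Z(G)|)%N.
      by case: (idx x xGZ) => [[]|[]] //; rewrite h4.
    have u1 : (#|Sx G x| <= #|'C_G[x] :\: 'Z(G)|)%N := subset_leq_card (Ssub x xGZ).
    have u2 : (#|x *: 'Z(G)| <= #|Sx G x|)%N := subset_leq_card (Scos x xG).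
    rewrite cardHZ // c2 in u1; rewrite card_lcoset in u2.
    lia.
  by move=> x y xG yG; rewrite !deg_eq !key.
Qed.
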